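(* Let $(G,S)$ and $(H,T)$ be finitely generated groups with finite generating sets, such that there exists a snake embedding $\phi:G\to H$ (from $(G,S)$ to $(H,T)$). Then the infinite snake problem (resp. the ouroboros problem) for $(G,S)$ many-one reduces to the infinite snake problem (resp. the ouroboros problem) for $(H,T)$.
   Context: An invertible-reversible transducer is a tuple $\mathcal M=(Q,S,T,q_0,\delta,\eta)$ with $Q$ a finite set of states, $q_0\in Q$, $\delta:Q\times S\to Q$, $\eta:Q\times S\to T$ with $\eta(q,\cdot)$ injective for every $q$, and such that for all $q\in Q$, $s\in S$ there is a unique $q'$ with $\delta(q',s)=q$. One extends by $\eta(q,s^{-1})=\eta(q',s)^{-1}$ and $\delta(q,s^{-1})=q'$ where $q'$ is the unique state with $\delta(q',s)=q$. For $w\in(S\cup S^{-1})^*$, $q_w$ is the state reached from $q_0$ after reading $w$, and $f_{\mathcal M}:(S\cup S^{-1})^*\to(T\cup T^{-1})^*$ is defined by $f_{\mathcal M}(\epsilon)=\epsilon$, $f_{\mathcal M}(ws^{\pm1})=f_{\mathcal M}(w)\eta(q_w,s^{\pm1})$. A map $\phi:G\to H$ is a snake embedding if there is such a transducer with $\phi(g)=\overline{f_{\mathcal M}(w)}$ for every word $w$ representing $g$, and $f_{\mathcal M}(w)=_H f_{\mathcal M}(w')$ iff $w=_G w'$. A tileset graph for $(G,S)$ is a finite multigraph $\Gamma=(A,B)$ with edges $(a,a',s)$, $a,a'\in A$, $s\in S\cup S^{-1}$, with $(a,a',s)\in B\Rightarrow(a',a,s^{-1})\in B$. A $\Gamma$-snake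 on $I\subseteq\mathbb{Z}$ ($I=\mathbb{Z}$, $\mathbb{N}$ or an interval) is $(\omega,\zeta)$, $\omega:I\to G$ injective, $\zeta:I\to A$, with $d\omega_i:=\omega(i)^{-1}\omega(i+1)\in S\cup S^{-1}$ and $(\zeta(i),\zeta(i+1),d\omega_i)\in B$ whenever $i,i+1\in I$. A $\Gamma$-ouroboros is such a pair on $\{0,\dots,n\}$, $n\ge3$, with $\omega$ injective on $\{0,\dots,n-1\}$ and $\omega(n)=\omega(0)$. The infinite snake problem (resp. ouroboros problem) for a group with generating set: given a tileset graph $\Gamma$, decide whether a $\Gamma$-snake on $\mathbb{Z}$ (resp. a $\Gamma$-ouroboros) exists. *)

(* Defs.v *)
(* Groups are MathComp's (possibly infinite) [groupType]
   from boot/monoid.v; computability is modelled by Kleene's partial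
   recursive functions on nat (defined below). *)
From HB Require Import structures.
From mathcomp Require Import all_boot all_order ssralg ssrint.
From mathcomp Require Export monoid.

Set Implicit Arguments.
Unset Strict Implicit.
Unset Printing Implicit Defensive.

(* Words over S ∪ S^{-1}: a letter is (s, true) for s, (s, false) for s^{-1}. *)

Definition letter_inv (S : Type) (l : S * bool) : S * bool := (l.1, ~~ l.2).

Section Words.
Local Open Scope group_scope.
Variables (G : groupType) (S : Type) (gen : S -> G).

Definition letter_val (l : S * bool) : G :=
  if l.2 then gen l.1 else (gen l.1)^-1.

Definition word_val (w : seq (S * bool)) : G :=
  foldr (fun l acc => letter_val l * acc) 1 w.

Definition generates : Prop := forall g : G, exists w, word_val w = g.
End Words.

Section Transducer.
Variables (Q : finType) (S T : Type) (delta : Q -> S -> Q) (eta : Q -> S -> T).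

Definition is_ir_transducer : Prop :=
  (forall q, injective (eta q)) /\
  (forall (q : Q) (s : S), exists! q', delta q' s = q).

Definition pred_state (q : Q) (s : S) : Q := odflt q [pick q' | delta q' s == q].

Definition tstep (q : Q) (l : S * bool) : Q :=
  if l.2 then delta q l.1 else pred_state q l.1.

Definition tout (q : Q) (l : S * bool) : T * bool :=
  if l.2 then (eta q l.1, true) else (eta (pred_state q l.1) l.1, false).

Fixpoint trans_fun (q : Q) (w : seq (S * bool)) : seq (T * bool) :=
  if w is l :: w' then tout q l :: trans_fun (tstep q l) w' else [::].
End Transducer.

Definition snake_embedding (G H : groupType) (S T : Type)
    (gS : S -> G) (gT : T -> H) (phi : G -> H) : Prop :=
  exists (Q : finType) (q0 : Q) (delta : Q -> S -> Q) (eta : Q -> S -> T),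
    is_ir_transducer delta eta /\
    (forall w, phi (word_val gS w) = word_val gT (trans_fun delta eta q0 w)) /\
    (forall w w', word_val gT (trans_fun delta eta q0 w) =
                  word_val gT (trans_fun delta eta q0 w')
                  <-> word_val gS w = word_val gS w').

(* Tileset graphs: tiles A = {0, ..., ntiles-1}, edges (a, a', letter). *)

Record tileset (L : Type) := Tileset { ntiles : nat; tedges : seq (nat * nat * L) }.

Definition tileset_wf (S : eqType) (Gam : tileset (S * bool)) : Prop :=
  forall a a' l, (a, a', l) \in tedges Gam ->
    [/\ a < ntiles Gam, a' < ntiles Gam & (a', a, letter_inv l) \in tedges Gam].

Section Snakes.
Local Open Scope group_scope.
Variables (G : groupType) (S : eqType) (gen : S -> G).

Definition edge_ok (Gam : tileset (S * bool)) (a a' : nat) (g : G) : Prop :=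
  exists l, letter_val gen l = g /\ (a, a', l) \in tedges Gam.

Definition has_Z_snake (Gam : tileset (S * bool)) : Prop :=
  exists (om : int -> G) (ze : int -> nat),
    injective om /\ (forall i, ze i < ntiles Gam) /\
    (forall i : int, edge_ok Gam (ze i) (ze (i + 1)%R) ((om i)^-1 * om (i + 1)%R)).

Definition has_ouroboros (Gam : tileset (S * bool)) : Prop :=
  exists (n : nat) (om : nat -> G) (ze : nat -> nat),
    3 <= n /\
    (forall i j, i < n -> j < n -> om i = om j -> i = j) /\
    om n = om 0 /\
    (forall i, i <= n -> ze i < ntiles Gam) /\
    (forall i, i < n -> edge_ok Gam (ze i) (ze i.+1) ((om i)^-1 * om i.+1)).
End Snakes.

Inductive recf : Type :=
| RZero
| RSucc
| RProj (i : nat)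
| RComp (f : recf) (gs : list recf)
| RPrim (f g : recf)
| RMu (f : recf).

Inductive reval : recf -> seq nat -> nat -> Prop :=
| ev_zero v : reval RZero v 0
| ev_succ x v : reval RSucc (x :: v) x.+1
| ev_proj i v : reval (RProj i) v (nth 0 v i)
| ev_comp f gs v ys y : revals gs v ys -> reval f ys y -> reval (RComp f gs) v y
| ev_prim0 f g v y : reval f v y -> reval (RPrim f g) (0 :: v) y
| ev_primS f g n v r y :
    reval (RPrim f g) (n :: v) r -> reval g (n :: r :: v) y ->
    reval (RPrim f g) (n.+1 :: v) y
| ev_mu f v n :
    reval f (n :: v) 0 -> (forall m, m < n -> exists k, reval f (m :: v) k.+1) ->
    reval (RMu f) v n
with revals : seq recf -> seq nat -> seq nat -> Prop :=
| evs_nil v : revals [::] v [::]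
| evs_cons g gs v y ys : reval g v y -> revals gs v ys -> revals (g :: gs) v (y :: ys).

Definition npair (x y : nat) : nat := ((x + y) * (x + y).+1)./2 + y.

Fixpoint enc_list (l : seq nat) : nat :=
  if l is x :: l' then (npair x (enc_list l')).+1 else 0.

Definition enc_letter (S : finType) (l : S * bool) : nat :=
  (enum_rank l.1).*2 + l.2.

Definition enc_tileset (S : finType) (Gam : tileset (S * bool)) : nat :=
  npair (ntiles Gam)
        (enc_list [seq npair e.1.1 (npair e.1.2 (enc_letter e.2)) | e <- tedges Gam]).

Definition many_one_reduces (S T : finType)
    (P1 : tileset (S * bool) -> Prop) (P2 : tileset (T * bool) -> Prop) : Prop :=
  exists F : tileset (S * bool) -> tileset (T * bool),
    (exists c : recf, forall Gam, reval c [:: enc_tileset Gam] (enc_tileset (F Gam))) /\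
    (forall Gam, tileset_wf Gam ->
       tileset_wf (F Gam) /\ (P1 Gam <-> P2 (F Gam))).

(* Main.v *)
Require Import Defs.
From HB Require Import structures.
From mathcomp Require Import all_boot all_order ssralg ssrint.
From mathcomp Require Import monoid.
From mathcomp Require Import zify.
From Stdlib Require Import ClassicalEpsilon.

Set Implicit Arguments.
Unset Strict Implicit.
Unset Printing Implicit Defensive.



Definition rcomp (k : nat) (f : seq nat -> nat) :=
  exists c, forall v, size v = k -> reval c v (f v).

Lemma rc_ext k f g : rcomp k f -> (forall v, size v = k -> f v = g v) -> rcomp k g.
Proof. by move=> [c Hc] E; exists c => v Hv; rewrite -E //; apply: Hc. Qed.

Lemma rc_proj k i : rcomp k (fun v => nth 0 v i).
Proof. by exists (RProj i) => v _; constructor. Qed.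
Arguments rc_proj {k i}.

Lemma rc_zero k : rcomp k (fun _ => 0).
Proof. by exists RZero => v _; constructor. Qed.

Lemma rc_succ : rcomp 1 (fun v => (nth 0 v 0).+1).
Proof. by exists RSucc => [[|x [|]]] //= _; constructor. Qed.

Fixpoint allrc k (gs : seq (seq nat -> nat)) : Prop :=
  if gs is g :: gs' then rcomp k g /\ allrc k gs' else True.

Lemma allrc_codes k gs : allrc k gs ->
  exists cs, forall v, size v = k -> revals cs v (map (fun g => g v) gs).
Proof.
elim: gs => [|g gs IH] /= => [_|[[c Hc] /IH [cs Hcs]]].
  by exists [::] => v _; constructor.
by exists (c :: cs) => v Hv; constructor; [apply: Hc | apply: Hcs].
Qed.

Lemma rc_comp m k f gs : rcomp m f -> size gs = m -> allrc k gs ->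
  rcomp k (fun v => f (map (fun g => g v) gs)).
Proof.
move=> [c Hc] Hs /allrc_codes [cs Hcs].
exists (RComp c cs) => v Hv; econstructor; first exact: Hcs.
by apply: Hc; rewrite size_map.
Qed.

Fixpoint prec (f : seq nat -> nat) (g : seq nat -> nat) n v :=
  if n is n'.+1 then g (n' :: prec f g n' v :: v) else f v.

Lemma rc_prim k f g : rcomp k f -> rcomp k.+2 g ->
  rcomp k.+1 (fun v => prec f g (head 0 v) (behead v)).
Proof.
move=> [cf Hf] [cg Hg]; exists (RPrim cf cg) => [[|n v]] //= [Hv].
elim: n => [|n IH] /=; first by constructor; apply: Hf.
by econstructor; first exact: IH; apply: Hg => /=; rewrite Hv.
Qed.

Lemma rc_comp1 k (f : nat -> nat) g :
  rcomp 1 (fun v => f (nth 0 v 0)) -> rcomp k g -> rcomp k (fun v => f (g v)).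
Proof.
move=> Hf Hg; have H := @rc_comp 1 k _ [:: g] Hf erefl (conj Hg I).
by apply: (rc_ext H).
Qed.

Lemma rc_comp2 k (f : nat -> nat -> nat) g h :
  rcomp 2 (fun v => f (nth 0 v 0) (nth 0 v 1)) -> rcomp k g -> rcomp k h ->
  rcomp k (fun v => f (g v) (h v)).
Proof.
move=> Hf Hg Hh; have := @rc_comp 2 k _ [:: g; h] Hf erefl (conj Hg (conj Hh I)).
by move=> H; apply: (rc_ext H).
Qed.

Lemma rc_const k n : rcomp k (fun _ => n).
Proof.
elim: n => [|n IH]; first exact: rc_zero.
exact: (rc_comp1 (f := S) rc_succ IH).
Qed.

Notation rc1 f := (rcomp 1 (fun v => f (nth 0 v 0))).
Notation rc2 f := (rcomp 2 (fun v => f (nth 0 v 0) (nth 0 v 1))).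

Lemma rc_add : rc2 addn.
Proof.
have H := @rc_prim 1 (fun v => nth 0 v 0) (fun v => (nth 0 v 1).+1)
  (rc_proj (i:=0)) (rc_comp1 (f := S) rc_succ (rc_proj (k:=3) (i:=1))).
apply: (rc_ext H) => [[|n [|y [|]]]] //= _.
by elim: n => //= n ->.
Qed.

Lemma rc_mul : rc2 muln.
Proof.
have H := @rc_prim 1 (fun _ => 0) (fun v => nth 0 v 1 + nth 0 v 2)
  (rc_zero _) (rc_comp2 rc_add (rc_proj (k:=3) (i:=1)) (rc_proj (k:=3) (i:=2))).
apply: (rc_ext H) => [[|n [|y [|]]]] //= _.
by elim: n => //= n ->; rewrite mulSn addnC.
Qed.

Lemma rc_pred : rc1 predn.
Proof.
have H := @rc_prim 0 (fun _ => 0) (fun v => nth 0 v 0) (rc_zero _) (rc_proj (k:=2) (i:=0)).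
by apply: (rc_ext H) => [[|n [|]]] //= _; case: n.
Qed.

Lemma rc_subr : rc2 (fun y x => x - y).
Proof.
have H := @rc_prim 1 (fun v => nth 0 v 0) (fun v => (nth 0 v 1).-1)
  (rc_proj (i:=0)) (rc_comp1 rc_pred (rc_proj (k:=3) (i:=1))).
apply: (rc_ext H) => [[|n [|y [|]]]] //= _.
by elim: n => [|n /= ->]; rewrite ?subn0 // subnS.
Qed.

Lemma rc_sub : rc2 subn.
Proof.
exact: (@rc_comp2 2 (fun y x => x - y) _ _ rc_subr (rc_proj (k:=2) (i:=1)) (rc_proj (k:=2) (i:=0))).
Qed.

Definition cond (c a b : nat) := if c is 0 then b else a.

Lemma rc_cond : rcomp 3 (fun v => cond (nth 0 v 0) (nth 0 v 1) (nth 0 v 2)).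
Proof.
have H := @rc_prim 2 (fun v => nth 0 v 1) (fun v => nth 0 v 2)
  (rc_proj (i:=1)) (rc_proj (k:=4) (i:=2)).
by apply: (rc_ext H) => [[|n [|x [|y [|]]]]] //= _; case: n.
Qed.

Lemma rc_comp3 k (f : nat -> nat -> nat -> nat) g h j :
  rcomp 3 (fun v => f (nth 0 v 0) (nth 0 v 1) (nth 0 v 2)) -> rcomp k g -> rcomp k h ->
  rcomp k j -> rcomp k (fun v => f (g v) (h v) (j v)).
Proof.
move=> Hf Hg Hh Hj.
have := @rc_comp 3 k _ [:: g; h; j] Hf erefl (conj Hg (conj Hh (conj Hj I))).
by move=> H; apply: (rc_ext H).
Qed.

Lemma rc_odd : rc1 (fun n => nat_of_bool (odd n)).
Proof.
have H := @rc_prim 0 (fun _ => 0) (fun v => 1 - nth 0 v 1) (rc_zero _)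
  (rc_comp2 rc_sub (rc_const _ 1) (rc_proj (k:=2) (i:=1))).
apply: (rc_ext H) => [[|n [|]]] //= _.
by elim: n => //= n ->; case: (odd n).
Qed.

Lemma rc_half : rc1 half.
Proof.
have H := @rc_prim 0 (fun _ => 0) (fun v => nth 0 v 1 + odd (nth 0 v 0)) (rc_zero _)
  (rc_comp2 rc_add (rc_proj (k:=2) (i:=1)) (rc_comp1 rc_odd (rc_proj (k:=2) (i:=0)))).
apply: (rc_ext H) => [[|n [|]]] //= _.
by elim: n => //= n ->; rewrite uphalf_half addnC.
Qed.



Lemma rc_iszero : rc1 (fun x => cond x 0 1).
Proof. exact: (rc_comp3 rc_cond (rc_proj (k:=1) (i:=0)) (rc_const _ 0) (rc_const _ 1)). Qed.

Definition lebn a b := cond (a - b) 0 1.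
Lemma lebnE a b : lebn a b = (a <= b).
Proof. by rewrite /lebn /leq; case: (a - b). Qed.

Lemma rc_leb : rc2 lebn.
Proof. exact: (rc_comp1 rc_iszero rc_sub). Qed.

Definition tri s := (s * s.+1)./2.
Arguments tri : simpl never.

Lemma halfD2 m n : (m + n.*2)./2 = m./2 + n.
Proof. by rewrite halfD odd_double andbF add0n doubleK. Qed.

Lemma triS s : tri s.+1 = tri s + s.+1.
Proof.
rewrite /tri -halfD2; congr half; rewrite -mul2n; lia.
Qed.

Lemma tri_mono m n : m <= n -> tri m <= tri n.
Proof.
elim: n => [|n IH]; first by rewrite leqn0 => /eqP ->.
rewrite leq_eqVlt => /orP [/eqP -> //| H]; rewrite triS.
by apply: leq_trans (IH H) (leq_addr _ _).
Qed.

Lemma npairE x y : npair x y = tri (x + y) + y.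
Proof. by []. Qed.

Lemma rc_tri : rc1 tri.
Proof.
exact: (rc_comp1 rc_half (rc_comp2 rc_mul (rc_proj (k:=1) (i:=0))
   (rc_comp1 rc_succ (rc_proj (k:=1) (i:=0))))).
Qed.

Lemma rc_npair : rc2 npair.
Proof.
apply: (rc_comp2 rc_add _ (rc_proj (k:=2) (i:=1))).
exact: (rc_comp1 rc_tri rc_add).
Qed.

Fixpoint ssum z := if z is z'.+1 then
  (if tri (ssum z').+1 <= z'.+1 then (ssum z').+1 else ssum z') else 0.

Lemma ssum_spec z : tri (ssum z) <= z < tri (ssum z).+1.
Proof.
elim: z => [|z IH] //=.
have := triS (ssum z).+1; have := triS (ssum z).
case: ifP => H /=; lia.
Qed.

Lemma ssum_uniq s z : tri s <= z < tri s.+1 -> ssum z = s.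
Proof.
move=> Hs; have Hz := ssum_spec z.
case: (ltngtP (ssum z) s) => // H.
  have := tri_mono H; lia.
have := tri_mono H; lia.
Qed.

Lemma ssum_npair x y : ssum (npair x y) = x + y.
Proof. apply: ssum_uniq; rewrite npairE triS; lia. Qed.

Definition unp2 z := z - tri (ssum z).
Definition unp1 z := ssum z - unp2 z.

Lemma unp2E x y : unp2 (npair x y) = y.
Proof. by rewrite /unp2 ssum_npair npairE addKn. Qed.
Lemma unp1E x y : unp1 (npair x y) = x.
Proof. by rewrite /unp1 unp2E ssum_npair addnK. Qed.

Lemma rc_ssum : rc1 ssum.
Proof.
have H := @rc_prim 0 (fun _ => 0)
  (fun v => cond (lebn (tri (nth 0 v 1).+1) (nth 0 v 0).+1) (nth 0 v 1).+1 (nth 0 v 1))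
  (rc_zero _)
  (rc_comp3 rc_cond (rc_comp2 rc_leb (rc_comp1 rc_tri (rc_comp1 rc_succ (rc_proj (k:=2) (i:=1))))
          (rc_comp1 rc_succ (rc_proj (k:=2) (i:=0))))
     (rc_comp1 rc_succ (rc_proj (k:=2) (i:=1))) (rc_proj (k:=2) (i:=1))).
apply: (rc_ext H) => [[|n [|]]] //= _.
elim: n => //= n ->; rewrite lebnE; by case: ifP.
Qed.

Lemma rc_unp2 : rc1 unp2.
Proof. exact: (rc_comp2 rc_sub (rc_proj (k:=1) (i:=0)) (rc_comp1 rc_tri rc_ssum)). Qed.
Lemma rc_unp1 : rc1 unp1.
Proof. exact: (rc_comp2 rc_sub rc_ssum rc_unp2). Qed.

Definition tlc L := unp2 L.-1.
Definition hdc L := unp1 L.-1.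
Definition consc x L := (npair x L).+1.

Lemma rc_tlc : rc1 tlc.
Proof. exact: (rc_comp1 rc_unp2 rc_pred). Qed.
Lemma rc_hdc : rc1 hdc.
Proof. exact: (rc_comp1 rc_unp1 rc_pred). Qed.
Lemma rc_consc : rc2 consc.
Proof. exact: (rc_comp1 rc_succ rc_npair). Qed.

Definition dropc k L := iter k tlc L.

Lemma rc_dropc : rc2 dropc.
Proof.
have H := @rc_prim 1 (fun v => nth 0 v 0) (fun v => tlc (nth 0 v 1))
  (rc_proj (k:=1) (i:=0)) (rc_comp1 rc_tlc (rc_proj (k:=3) (i:=1))).
apply: (rc_ext H) => [[|n [|L [|]]]] //= _.
by elim: n => //= n ->.
Qed.

Lemma unp2_0 : unp2 0 = 0.
Proof. by rewrite -[0]/(npair 0 0) unp2E. Qed.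

Lemma dropcE k l : dropc k (enc_list l) = enc_list (drop k l).
Proof.
elim: k => [|k IH]; first by rewrite drop0.
rewrite /dropc iterS -/(dropc k _) IH.
rewrite -add1n -drop_drop; case: (drop k l) => [|x t] /=.
  by rewrite /tlc unp2_0.
by rewrite /tlc /= unp2E drop0.
Qed.

Fixpoint cntc k L := if k is k'.+1 then cntc k' L + (dropc k' L != 0) else 0.
Definition lenc L := cntc L L.

Lemma enc_list_size l : size l <= enc_list l.
Proof.
elim: l => //= x l IH; rewrite ltnS npairE; lia.
Qed.

Lemma cntcE k l : cntc k (enc_list l) = minn k (size l).
Proof.
elim: k => [|k IH] /=; first by lia.
rewrite IH dropcE.
case: (ltnP k (size l)) => H.
  have : drop k l != [::] by rewrite -size_eq0 size_drop subn_eq0 -ltnNge.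
  case: (drop k l) => //= x t _; lia.
have -> : drop k l = [::] by apply: drop_oversize.
simpl; lia.
Qed.

Lemma lencE l : lenc (enc_list l) = size l.
Proof. by rewrite /lenc cntcE; apply/minn_idPr; apply: enc_list_size. Qed.

Lemma rc_cntc : rc2 cntc.
Proof.
have H := @rc_prim 1 (fun _ => 0) (fun v => nth 0 v 1 + cond (dropc (nth 0 v 0) (nth 0 v 2)) 1 0)
  (rc_zero _) (rc_comp2 rc_add (rc_proj (k:=3) (i:=1))
     (rc_comp3 rc_cond (rc_comp2 rc_dropc (rc_proj (k:=3) (i:=0)) (rc_proj (k:=3) (i:=2)))
        (rc_const _ 1) (rc_const _ 0))).
apply: (rc_ext H) => [[|n [|L [|]]]] //= _.
by elim: n => //= n ->; case: (dropc n L).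
Qed.

Lemma rc_lenc : rc1 lenc.
Proof. exact: (rc_comp2 rc_cntc (rc_proj (k:=1) (i:=0)) (rc_proj (k:=1) (i:=0))). Qed.

Section Fold.
Variable h : nat -> nat -> nat.
Hypothesis rch : rc2 h.

Fixpoint foldc j L := if j is j'.+1 then
  h (hdc (dropc (lenc L - j'.+1) L)) (foldc j' L) else 0.

Lemma rc_foldc : rc2 foldc.
Proof.
have H := @rc_prim 1 (fun _ => 0)
  (fun v => h (hdc (dropc (lenc (nth 0 v 2) - (nth 0 v 0).+1) (nth 0 v 2))) (nth 0 v 1))
  (rc_zero _) (rc_comp2 rch (rc_comp1 rc_hdc (rc_comp2 rc_dropc
       (rc_comp2 rc_sub (rc_comp1 rc_lenc (rc_proj (k:=3) (i:=2)))
           (rc_comp1 rc_succ (rc_proj (k:=3) (i:=0))))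
       (rc_proj (k:=3) (i:=2)))) (rc_proj (k:=3) (i:=1))).
apply: (rc_ext H) => [[|n [|L [|]]]] //= _.
by elim: n => //= n ->.
Qed.

Definition rfold L := foldc (lenc L) L.

Lemma rc_rfold : rc1 rfold.
Proof. exact: (rc_comp2 rc_foldc rc_lenc (rc_proj (k:=1) (i:=0))). Qed.

Lemma foldcE l j : j <= size l ->
  foldc j (enc_list l) = foldr h 0 (drop (size l - j) l).
Proof.
elim: j => [|j IH] Hj /=; first by rewrite subn0 drop_size.
rewrite IH ?(ltnW Hj) // lencE dropcE.
rewrite (drop_nth 0 (n := size l - j.+1)); last by lia.
have -> : (size l - j.+1).+1 = size l - j by lia.
by rewrite /hdc /= unp1E.
Qed.

Lemma rfoldE l : rfold (enc_list l) = foldr h 0 l.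
Proof. by rewrite /rfold foldcE lencE ?subnn ?drop0. Qed.
End Fold.

Lemma rc_table tbl : rc1 (fun c => nth 0 tbl c).
Proof.
elim: tbl => [|x t IH].
  by apply: (rc_ext (rc_zero 1)) => v _; rewrite nth_nil.
have H := rc_comp3 rc_cond (rc_proj (k:=1) (i:=0)) (rc_comp1 IH (rc_comp1 rc_pred (rc_proj (k:=1) (i:=0))))
   (rc_const 1 x).
by apply: (rc_ext H) => v _; case: (nth 0 v 0).
Qed.

Lemma rc_fun_bounded (f : nat -> nat) N : (forall c, N <= c -> f c = 0) -> rc1 f.
Proof.
move=> Hf; apply: (rc_ext (rc_table [seq f i | i <- iota 0 N])) => v _.
case: (ltnP (nth 0 v 0) N) => H.
  by rewrite (nth_map 0) ?size_iota // nth_iota.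
by rewrite nth_default ?size_map ?size_iota // Hf.
Qed.



Lemma choice_fun (A B : Type) (P : A -> B -> Prop) :
  (forall a, exists b, P a b) -> exists f : A -> B, forall a, P a (f a).
Proof.
move=> H; exists (fun a => proj1_sig (constructive_indefinite_description _ (H a))).
by move=> a; case: (constructive_indefinite_description _ (H a)).
Qed.

Lemma letter_invK (S : Type) (l : S * bool) : letter_inv (letter_inv l) = l.
Proof. by case: l => s b; rewrite /letter_inv /= negbK. Qed.

Section WordLemmas.
Local Open Scope group_scope.
Variables (G : groupType) (S : Type) (gen : S -> G).

Lemma word_val_cat w1 w2 : word_val gen (w1 ++ w2) = word_val gen w1 * word_val gen w2.
Proof. by elim: w1 => [|l w IH] /=; rewrite ?mul1g // IH mulgA. Qed.

Lemma word_val_rcons w l : word_val gen (rcons w l) = word_val gen w * letter_val gen l.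
Proof. by rewrite -cats1 word_val_cat /= mulg1. Qed.

Lemma letter_val_inv l : letter_val gen (letter_inv l) = (letter_val gen l)^-1.
Proof. by case: l => s [] //=; rewrite /letter_val /= invgK. Qed.
End WordLemmas.

Section TransLemmas.
Variables (Q : finType) (S T : Type) (delta : Q -> S -> Q) (eta : Q -> S -> T).
Hypothesis ir : is_ir_transducer delta eta.

Lemma pred_stateP q s : delta (pred_state delta q s) s = q.
Proof.
rewrite /pred_state; case: pickP => [q' /eqP //|H].
have [q' [Hq' _]] := ir.2 q s.
by have := H q'; rewrite Hq' eqxx.
Qed.

Lemma pred_delta q s : pred_state delta (delta q s) s = q.
Proof.
have [q' [_ U]] := ir.2 (delta q s) s.
by rewrite -(U _ (pred_stateP _ _)) (U q).
Qed.

Lemma tstep_inv q l : tstep delta (tstep delta q l) (letter_inv l) = q.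
Proof. by case: l => s [] /=; rewrite /tstep /= ?pred_delta ?pred_stateP. Qed.

Lemma tstep_invr q l : tstep delta (tstep delta q (letter_inv l)) l = q.
Proof. by rewrite -{2}(letter_invK l) tstep_inv. Qed.

Lemma tstep_inj l : injective (tstep delta ^~ l).
Proof. by move=> q1 q2 /= E; rewrite -(tstep_inv q1 l) E tstep_inv. Qed.

Lemma tout_inv q l : tout delta eta (tstep delta q l) (letter_inv l) = letter_inv (tout delta eta q l).
Proof. by case: l => s [] /=; rewrite /tout /tstep /letter_inv /= ?pred_delta. Qed.

Lemma trans_cat q w1 w2 : trans_fun delta eta q (w1 ++ w2) =
  trans_fun delta eta q w1 ++ trans_fun delta eta (foldl (tstep delta) q w1) w2.
Proof. by elim: w1 q => [|l w IH] q //=; rewrite IH. Qed.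

Lemma trans_rcons q w l : trans_fun delta eta q (rcons w l) =
  rcons (trans_fun delta eta q w) (tout delta eta (foldl (tstep delta) q w) l).
Proof. by rewrite -cats1 trans_cat cats1. Qed.
End TransLemmas.

Lemma NegzS1 n : (Negz n.+1 + 1)%R = Negz n.
Proof. rewrite !NegzE; lia. Qed.

Lemma int_ind2 (P : int -> Prop) : P 0%R -> (forall i, P i -> P (i + 1)%R) ->
  (forall i, P (i + 1)%R -> P i) -> forall i, P i.
Proof.
move=> H0 Hf Hb [n|n].
  elim: n => // n IH; move: (Hf _ IH); by rewrite -PoszD addn1.
elim: n => [|n IH]; first exact: (Hb (Negz 0) H0).
apply: (Hb (Negz n.+1)).
rewrite NegzS1.
exact IH.
Qed.

Definition Wz (L : Type) (u : seq L) (l : int -> L) (inv : L -> L) (i : int) : seq L :=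
  match i with
  | Posz n => u ++ mkseq (fun k => l (Posz k)) n
  | Negz n => u ++ mkseq (fun k => inv (l (Negz k))) n.+1
  end.

Lemma Wz0 L u l inv : @Wz L u l inv 0%R = u.
Proof. by rewrite /= cats0. Qed.

Lemma Wz_step L u l inv i :
  @Wz L u l inv (i + 1)%R = rcons (Wz u l inv i) (l i) \/
  Wz u l inv i = rcons (Wz u l inv (i + 1)%R) (inv (l i)).
Proof.
case: i => [n|[|n]].
- left; rewrite -PoszD addn1 /= mkseqS -rcons_cat //.
- right; have -> : (Negz 0 + 1)%R = 0%R by [].
  by rewrite /= cats0 cats1.
- right; rewrite NegzS1.
  by rewrite /= mkseqS rcons_cat.
Qed.



Lemma mulgVK' (G : groupType) (x y : G) : (x * (x^-1 * y))%g = y.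
Proof. by rewrite mulgA mulgV mul1g. Qed.
Lemma mulKg' (G : groupType) (x y : G) : (x^-1 * (x * y))%g = y.
Proof. by rewrite mulgA mulVg mul1g. Qed.

Section Main.
Variables (G H : groupType) (S T : finType) (gS : S -> G) (gT : T -> H).
Variables (Q : finType) (q0 : Q) (delta : Q -> S -> Q) (eta : Q -> S -> T).
Hypothesis ir : is_ir_transducer delta eta.
Hypothesis hiff : forall w w', word_val gT (trans_fun delta eta q0 w) =
   word_val gT (trans_fun delta eta q0 w') <-> word_val gS w = word_val gS w'.
Hypothesis genS : generates gS.

Definition st w := foldl (tstep delta) q0 w.
Definition tv w := word_val gT (trans_fun delta eta q0 w).
Definition reach q := exists w, st w = q.
Definition reachb q : bool := if excluded_middle_informative (reach q) then true else false.
Definition rs := [seq q <- enum Q | reachb q].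

Lemma mem_rs q : q \in rs <-> reach q.
Proof.
rewrite mem_filter mem_enum andbT /reachb.
by case: excluded_middle_informative.
Qed.

Lemma reach_st w : st w \in rs.
Proof. by apply/mem_rs; exists w. Qed.

Definition nQ := #|Q|.
Definition tileT a (q : Q) := a * nQ + enum_rank q.

Lemma nQ_gt0 : 0 < nQ.
Proof. by rewrite /nQ; apply/card_gt0P; exists q0. Qed.

Lemma rank_lt (q : Q) : enum_rank q < nQ.
Proof. exact: ltn_ord. Qed.

Lemma tileT_div a q : tileT a q %/ nQ = a.
Proof. by rewrite /tileT divnMDl ?nQ_gt0 // divn_small ?rank_lt ?addn0. Qed.

Lemma tileT_mod a q : tileT a q %% nQ = enum_rank q.
Proof. by rewrite /tileT modnMDl modn_small ?rank_lt. Qed.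

Lemma tileT_inj a a' q q' : tileT a q = tileT a' q' -> a = a' /\ q = q'.
Proof.
move=> E; split; first by rewrite -(tileT_div a q) E tileT_div.
apply: enum_rank_inj; apply: val_inj => /=.
by rewrite -(tileT_mod a q) E tileT_mod.
Qed.

Lemma tileT_lt a q n : a < n -> tileT a q < n * nQ.
Proof. move=> Ha; have := rank_lt q; rewrite /tileT; nia. Qed.

Definition outE q (e : nat * nat * (S * bool)) : nat * nat * (T * bool) :=
  (tileT e.1.1 q, tileT e.1.2 (tstep delta q e.2), tout delta eta q e.2).

Definition Fg (Gam : tileset (S * bool)) : tileset (T * bool) :=
  Tileset (ntiles Gam * nQ) (flatten [seq [seq outE q e | q <- rs] | e <- tedges Gam]).

Lemma mem_Fg Gam x : x \in tedges (Fg Gam) ->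
  exists e q, [/\ e \in tedges Gam, q \in rs & x = outE q e].
Proof.
case/flatten_mapP => e He /mapP [q Hq ->]; by exists e, q.
Qed.

Lemma mem_Fg2 Gam e q : e \in tedges Gam -> q \in rs -> outE q e \in tedges (Fg Gam).
Proof.
move=> He Hq; apply/flatten_mapP; exists e => //; exact: map_f.
Qed.

Lemma Fg_wf Gam : tileset_wf Gam -> tileset_wf (Fg Gam).
Proof.
move=> wf a a' t /mem_Fg [[[b b'] l] [q [He Hq [E1 E2 E3]]]].
have [Hb Hb' Hinv] := wf _ _ _ He.
split; rewrite ?E1 ?E2 /=; try exact: tileT_lt.
have -> : (tileT b' (tstep delta q l), tileT b q, letter_inv t) =
   outE (tstep delta q l) (b', b, letter_inv l).
  by rewrite /outE /= (tstep_inv ir) E3 (tout_inv ir).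
apply: mem_Fg2 => //.
case/mem_rs: Hq => w Hw; apply/mem_rs; exists (rcons w l).
by rewrite /st foldl_rcons -/(st w) Hw.
Qed.

Lemma step_props w l w' : (w' = rcons w l \/ w = rcons w' (letter_inv l)) ->
  [/\ word_val gS w' = (word_val gS w * letter_val gS l)%g,
      st w' = tstep delta (st w) l &
      tv w' = (tv w * letter_val gT (tout delta eta (st w) l))%g].
Proof.
case=> ->.
  by rewrite /st /tv word_val_rcons foldl_rcons trans_rcons word_val_rcons.
have Hs : st (rcons w' (letter_inv l)) = tstep delta (st w') (letter_inv l).
  by rewrite /st foldl_rcons.
rewrite Hs (tstep_invr ir); split.
- by rewrite word_val_rcons letter_val_inv mulgVK.
- by [].
- rewrite /tv trans_rcons word_val_rcons -/(st w').
  have E := tout_inv ir (tstep delta (st w') (letter_inv l)) l.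
  rewrite (tstep_invr ir) in E.
  by rewrite E letter_val_inv mulgVK.
Qed.

Lemma Z_fw Gam : has_Z_snake gS Gam -> has_Z_snake gT (Fg Gam).
Proof.
move=> [om [ze [inj [zlt Hed]]]].
have [l Hl] := choice_fun Hed.
have [u Hu] := genS (om 0%R).
pose W := Wz u l (@letter_inv S).
have Hst i := step_props (Wz_step u l (@letter_inv S) i).
have Hval : forall i, word_val gS (W i) = om i.
  apply: int_ind2; first by rewrite /W Wz0.
  - move=> i IH; have [-> _ _] := Hst i; rewrite -/W IH (Hl i).1.
    by rewrite mulgVK'.
  - move=> i IH; have [E _ _] := Hst i; rewrite -/W IH (Hl i).1 mulgA in E.
    by move: E; rewrite -{1}[om (i + 1)%R]mul1g => /mulIg /esym /divg1_eq.
exists (fun i => tv (W i)), (fun i => tileT (ze i) (st (W i))).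
split; [|split].
- by move=> i j /hiff; rewrite !Hval => /inj.
- by move=> i; apply: tileT_lt.
move=> i; exists (tout delta eta (st (W i)) (l i)); split.
  by have [_ _ ->] := Hst i; rewrite -/W mulKg'.
have [_ E _] := Hst i; rewrite -/W in E.
have -> : (tileT (ze i) (st (W i)), tileT (ze (i + 1)%R) (st (W (i + 1)%R)),
   tout delta eta (st (W i)) (l i)) = outE (st (W i)) (ze i, ze (i + 1)%R, l i).
  by rewrite /outE /= E.
by apply: mem_Fg2; [apply: (Hl i).2 | apply: reach_st].
Qed.

Lemma Z_bw Gam : tileset_wf Gam -> has_Z_snake gT (Fg Gam) -> has_Z_snake gS Gam.
Proof.
move=> wf [om' [ze' [inj' [zlt' Hed']]]].
have Hex : forall i, exists p : nat * nat * (S * bool) * Q,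
   [/\ p.1 \in tedges Gam, p.2 \in rs, ze' i = tileT p.1.1.1 p.2,
       ze' (i + 1)%R = tileT p.1.1.2 (tstep delta p.2 p.1.2) &
       letter_val gT (tout delta eta p.2 p.1.2) = ((om' i)^-1 * om' (i + 1)%R)%g].
  move=> i; have [t [Ht /mem_Fg [[[a a'] l] [q [He Hq Et]]]]] := Hed' i.
  exists (a, a', l, q); split => //=.
  - by have := congr1 (fun x => x.1.1) Et.
  - by have := congr1 (fun x => x.1.2) Et.
  - by rewrite -Ht; have := congr1 snd Et => /= ->.
have [f Hf] := choice_fun Hex.
pose l i := (f i).1.2.
have Hcons : forall i, (f (i + 1)%R).2 = tstep delta (f i).2 (l i) /\
                       (f (i + 1)%R).1.1.1 = (f i).1.1.2.
  move=> i; have [_ _ E1 _ _] := Hf (i + 1)%R; have [_ _ _ E2 _] := Hf i.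
  by have [] := tileT_inj (etrans (esym E1) E2).
have [u Hu] : reach (f 0%R).2 by apply/mem_rs; have [] := Hf 0%R.
pose W := Wz u l (@letter_inv S).
have Hst i := step_props (Wz_step u l (@letter_inv S) i).
have HW : forall i, st (W i) = (f i).2.
  apply: int_ind2; first by rewrite /W Wz0.
  - move=> i IH; have [_ -> _] := Hst i; by rewrite -/W IH (Hcons i).1.
  - move=> i IH; have [_ E _] := Hst i; rewrite -/W IH (Hcons i).1 in E.
    exact: (tstep_inj ir (esym E)).
pose C := (tv u * (om' 0%R)^-1)%g.
have Htv : forall i, tv (W i) = (C * om' i)%g.
  apply: int_ind2; first by rewrite /W Wz0 /C mulgVK.
  - move=> i IH; have [_ _ ->] := Hst i; rewrite -/W IH HW.
    by have [_ _ _ _ ->] := Hf i; rewrite mulgA mulgK.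
  - move=> i IH; have [_ _ E] := Hst i; rewrite -/W IH HW in E.
    have [_ _ _ _ E'] := Hf i; rewrite E' in E.
    apply: (mulIg ((om' i)^-1 * om' (i + 1)%R)%g).
    by rewrite -E mulgA mulgK.
exists (fun i => word_val gS (W i)), (fun i => (f i).1.1.1).
split; [|split].
- move=> i j Hij; have : tv (W i) = tv (W j) by apply/hiff.
  rewrite !Htv => /mulgI; exact: inj'.
- move=> i; have [He _ _ _ _] := Hf i.
  by case: (f i).1 He => [[a a'] l'] He; have [] := wf _ _ _ He.
move=> i; exists (l i); split.
  by have [-> _ _] := Hst i; rewrite -/W mulKg'.
rewrite (Hcons i).2; have [He _ _ _ _] := Hf i.
by rewrite /l; case: (f i).1 He => [[a a'] l'].
Qed.


Definition Wn (u : seq (S * bool)) (l : nat -> S * bool) i := u ++ mkseq l i.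

Lemma Wn_step u l i : Wn u l i.+1 = rcons (Wn u l i) (l i).
Proof. by rewrite /Wn mkseqS rcons_cat. Qed.

Lemma O_fw Gam : has_ouroboros gS Gam -> has_ouroboros gT (Fg Gam).
Proof.
move=> [n [om [ze [H3 [inj [Hn [zlt Hed]]]]]]].
have n_gt0 : 0 < n by apply: leq_trans H3.
have [l0 _] := Hed 0 n_gt0.
have Hex : forall i, exists l, i < n -> letter_val gS l = ((om i)^-1 * om i.+1)%g /\
    (ze i, ze i.+1, l) \in tedges Gam.
  move=> i; case: (ltnP i n) => Hi; last by exists l0.
  by have [l Hl] := Hed i Hi; exists l.
have [l Hl] := choice_fun Hex.
have [u Hu] := genS (om 0).
pose W := Wn u l.
have Hst i := step_props (or_introl (Wn_step u l i)).
have Hval : forall i, i <= n -> word_val gS (W i) = om i.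
  elim=> [|i IH] Hi; first by rewrite /W /Wn cats0.
  have [-> _ _] := Hst i; rewrite -/W IH ?(ltnW Hi) // (Hl i Hi).1.
  by rewrite mulgVK'.
exists n, (fun i => tv (W i)), (fun i => tileT (ze i) (st (W i))).
split => //; split; [|split; [|split]].
- move=> i j Hi Hj E; apply: inj => //.
  rewrite -(Hval i (ltnW Hi)) -(Hval j (ltnW Hj)); exact: (proj1 (hiff _ _) E).
- have E : word_val gS (W n) = word_val gS (W 0) by rewrite !Hval.
  exact: (proj2 (hiff _ _) E).
- by move=> i Hi; apply: tileT_lt; apply: zlt.
move=> i Hi; exists (tout delta eta (st (W i)) (l i)); split.
  by have [_ _ ->] := Hst i; rewrite -/W mulKg'.
have [_ E _] := Hst i; rewrite -/W in E.
have -> : (tileT (ze i) (st (W i)), tileT (ze i.+1) (st (W i.+1)),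
   tout delta eta (st (W i)) (l i)) = outE (st (W i)) (ze i, ze i.+1, l i).
  by rewrite /outE /= E.
by apply: mem_Fg2; [apply: (Hl i Hi).2 | apply: reach_st].
Qed.

Lemma O_bw Gam : tileset_wf Gam -> has_ouroboros gT (Fg Gam) -> has_ouroboros gS Gam.
Proof.
move=> wf [n [om' [ze' [H3 [inj' [Hn' [zlt' Hed']]]]]]].
have n_gt0 : 0 < n by apply: leq_trans H3.
have Hex0 : forall i, i < n -> exists p : nat * nat * (S * bool) * Q,
   [/\ p.1 \in tedges Gam, p.2 \in rs, ze' i = tileT p.1.1.1 p.2,
       ze' i.+1 = tileT p.1.1.2 (tstep delta p.2 p.1.2) &
       letter_val gT (tout delta eta p.2 p.1.2) = ((om' i)^-1 * om' i.+1)%g].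
  move=> i Hi; have [t [Ht /mem_Fg [[[a a'] l] [q [He Hq Et]]]]] := Hed' i Hi.
  exists (a, a', l, q); split => //=.
  - by have := congr1 (fun x => x.1.1) Et.
  - by have := congr1 (fun x => x.1.2) Et.
  - by rewrite -Ht; have := congr1 snd Et => /= ->.
have [p0 _] := Hex0 0 n_gt0.
have Hex : forall i, exists p : nat * nat * (S * bool) * Q, i < n ->
   [/\ p.1 \in tedges Gam, p.2 \in rs, ze' i = tileT p.1.1.1 p.2,
       ze' i.+1 = tileT p.1.1.2 (tstep delta p.2 p.1.2) &
       letter_val gT (tout delta eta p.2 p.1.2) = ((om' i)^-1 * om' i.+1)%g].
  move=> i; case: (ltnP i n) => Hi; last by exists p0.
  by have [p Hp] := Hex0 i Hi; exists p.
have [f Hf] := choice_fun Hex.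
pose l i := (f i).1.2.
have Hcons : forall i, i.+1 < n -> (f i.+1).2 = tstep delta (f i).2 (l i).
  move=> i Hi; have [_ _ E1 _ _] := Hf i.+1 Hi; have [_ _ _ E2 _] := Hf i (ltnW Hi).
  by have [] := tileT_inj (etrans (esym E1) E2).
have [u Hu] : reach (f 0).2 by apply/mem_rs; have [] := Hf 0 n_gt0.
pose W := Wn u l.
have Hst i := step_props (or_introl (Wn_step u l i)).
have HW : forall i, i < n -> st (W i) = (f i).2.
  elim=> [|i IH] Hi; first by rewrite /W /Wn cats0.
  have [_ -> _] := Hst i; by rewrite -/W IH ?(ltnW Hi) // (Hcons i Hi).
pose C := (tv u * (om' 0)^-1)%g.
have Htv : forall i, i <= n -> tv (W i) = (C * om' i)%g.
  elim=> [|i IH] Hi; first by rewrite /W /Wn cats0 /C mulgVK.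
  have [_ _ ->] := Hst i; rewrite -/W IH ?(ltnW Hi) // HW //.
  by have [_ _ _ _ ->] := Hf i Hi; rewrite mulgA mulgK.
exists n, (fun i => word_val gS (W i)), (fun i => ze' i %/ nQ).
have Hze1 : forall i, i < n -> ze' i %/ nQ = (f i).1.1.1.
  by move=> i Hi; have [_ _ -> _ _] := Hf i Hi; rewrite tileT_div.
have Hze2 : forall i, i < n -> ze' i.+1 %/ nQ = (f i).1.1.2.
  by move=> i Hi; have [_ _ _ -> _] := Hf i Hi; rewrite tileT_div.
split => //; split; [|split; [|split]].
- move=> i j Hi Hj Hij; have : tv (W i) = tv (W j) by apply/hiff.
  rewrite (Htv i (ltnW Hi)) (Htv j (ltnW Hj)) => /mulgI; exact: inj'.
- apply: (proj1 (hiff _ _)); rewrite -/(tv (W n)) -/(tv (W 0)).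
  by rewrite (Htv n (leqnn n)) (Htv 0 (leq0n n)) Hn'.
- move=> i; rewrite leq_eqVlt => /orP [/eqP ->|Hi].
    have Hm : n.-1 < n by rewrite prednK.
    have -> : n = n.-1.+1 by rewrite prednK.
    rewrite Hze2 //; have [He _ _ _ _] := Hf _ Hm.
    by case: (f n.-1).1 He => [[a a'] l'] He; have [] := wf _ _ _ He.
  rewrite Hze1 //; have [He _ _ _ _] := Hf i Hi.
  by case: (f i).1 He => [[a a'] l'] He; have [] := wf _ _ _ He.
move=> i Hi; exists (l i); split.
  by have [-> _ _] := Hst i; rewrite -/W mulKg'.
rewrite Hze1 // Hze2 //; have [He _ _ _ _] := Hf i Hi.
by rewrite /l; case: (f i).1 He => [[a a'] l'].
Qed.


Definition encS (e : nat * nat * (S * bool)) := npair e.1.1 (npair e.1.2 (enc_letter e.2)).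
Definition encT (e : nat * nat * (T * bool)) := npair e.1.1 (npair e.1.2 (enc_letter e.2)).

Definition decl k := [pick l : S * bool | enc_letter l == k].
Definition tR q k := if decl k is Some l then nat_of_ord (enum_rank (tstep delta q l)) else 0.
Definition tT q k := if decl k is Some l then enc_letter (tout delta eta q l) else 0.

Lemma enc_letter_inj : injective (@enc_letter S).
Proof.
move=> [a b] [a' b']; rewrite /enc_letter /= => E.
have Eo := congr1 odd E; rewrite !oddD !odd_double /= in Eo.
have Eb : b = b' by case: b b' E Eo => [] [].
subst b'; move/addIn: E => /double_inj E.
by rewrite (enum_rank_inj (val_inj E)).
Qed.

Lemma decl_enc l : decl (enc_letter l) = Some l.
Proof.
rewrite /decl; case: pickP => [l' /eqP /enc_letter_inj -> //|Hn].
by have := Hn l; rewrite eqxx.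
Qed.

Lemma enc_letter_lt (l : S * bool) : enc_letter l < (#|S|).*2.
Proof.
rewrite /enc_letter; have Hr : enum_rank l.1 < #|S| := ltn_ord _.
move: Hr; case: l.2 => /=; rewrite -!muln2; lia.
Qed.

Lemma decl_big k : (#|S|).*2 <= k -> decl k = None.
Proof.
move=> Hk; rewrite /decl; case: pickP => // l /eqP E.
by have := enc_letter_lt l; rewrite E ltnNge Hk.
Qed.

Definition oc q c := npair (unp1 c * nQ + enum_rank q)
  (npair (unp1 (unp2 c) * nQ + tR q (unp2 (unp2 c))) (tT q (unp2 (unp2 c)))).

Lemma oc_enc q e : oc q (encS e) = encT (outE q e).
Proof.
by rewrite /oc /encS /encT /outE !unp2E !unp1E /tR /tT decl_enc.
Qed.

Definition stepL (qs : seq Q) c acc := foldr (fun q a => consc (oc q c) a) acc qs.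

Lemma stepL_enc qs e L :
  stepL qs (encS e) (enc_list L) = enc_list (map encT [seq outE q e | q <- qs] ++ L).
Proof. by elim: qs => //= q qs ->; rewrite oc_enc. Qed.

Lemma fold_main E : foldr (stepL rs) 0 (map encS E) =
  enc_list (map encT (flatten [seq [seq outE q e | q <- rs] | e <- E])).
Proof. by elim: E => //= e E ->; rewrite stepL_enc map_cat. Qed.

Definition Prog x := npair (unp1 x * nQ) (rfold (stepL rs) (unp2 x)).

Lemma prog_enc Gam : Prog (enc_tileset Gam) = enc_tileset (Fg Gam).
Proof.
rewrite /Prog /enc_tileset unp1E unp2E rfoldE.
by rewrite -/(encS _) fold_main.
Qed.

Lemma rc_tR q : rc1 (tR q).
Proof.
apply: (@rc_fun_bounded _ (#|S|).*2) => k Hk.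
by rewrite /tR decl_big.
Qed.

Lemma rc_tT q : rc1 (tT q).
Proof.
apply: (@rc_fun_bounded _ (#|S|).*2) => k Hk.
by rewrite /tT decl_big.
Qed.

Lemma rc_oc q : rc1 (oc q).
Proof.
have P0 := rc_proj (k:=1) (i:=0).
apply: (rc_comp2 rc_npair).
  exact: (rc_comp2 rc_add (rc_comp2 rc_mul (rc_comp1 rc_unp1 P0) (rc_const 1 nQ))
             (rc_const 1 (enum_rank q))).
apply: (rc_comp2 rc_npair).
  apply: (rc_comp2 rc_add (rc_comp2 rc_mul (rc_comp1 rc_unp1 (rc_comp1 rc_unp2 P0)) (rc_const 1 nQ))).
  exact: (rc_comp1 (rc_tR q) (rc_comp1 rc_unp2 (rc_comp1 rc_unp2 P0))).
exact: (rc_comp1 (rc_tT q) (rc_comp1 rc_unp2 (rc_comp1 rc_unp2 P0))).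
Qed.

Lemma rc_stepL qs : rc2 (stepL qs).
Proof.
elim: qs => [|q qs IH] /=.
  exact: (rc_proj (k:=2) (i:=1)).
exact: (rc_comp2 rc_consc (rc_comp1 (rc_oc q) (rc_proj (k:=2) (i:=0))) IH).
Qed.

Lemma rc_Prog : rc1 Prog.
Proof.
apply: (rc_comp2 rc_npair).
  exact: (rc_comp2 rc_mul (rc_comp1 rc_unp1 (rc_proj (k:=1) (i:=0))) (rc_const 1 nQ)).
exact: (rc_comp1 (rc_rfold (rc_stepL rs)) (rc_comp1 rc_unp2 (rc_proj (k:=1) (i:=0)))).
Qed.

End Main.


Theorem proposition7 (G H : groupType) (S T : finType)
    (gS : S -> G) (gT : T -> H)
    (injS : injective gS) (genS : generates gS)
    (injT : injective gT) (genT : generates gT)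
    (phi : G -> H) (hphi : snake_embedding gS gT phi) :
  many_one_reduces (has_Z_snake gS) (has_Z_snake gT) /\
  many_one_reduces (has_ouroboros gS) (has_ouroboros gT).
Proof.
have [Q [q0 [delta [eta [ir [_ hiff]]]]]] := hphi.
have [c Hc] := rc_Prog q0 delta eta.
have Hcomp : forall Gam, reval c [:: enc_tileset Gam] (enc_tileset (Fg q0 delta eta Gam)).
  by move=> Gam; rewrite -prog_enc; apply: (Hc [:: enc_tileset Gam]).
split; exists (Fg q0 delta eta); split; try by exists c.
- move=> Gam wf; split; first exact: Fg_wf.
  split; [exact: Z_fw | exact: Z_bw].
- move=> Gam wf; split; first exact: Fg_wf.
  split; [exact: O_fw | exact: O_bw].
Qed.
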